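(* Let $A$ be a non-negative $d\times d$ matrix with $\rho(A)>1$. If $X$ is a local minimum of problem (P), then $X\le A$ entrywise and $\rho(X)=1$.
   Context: $\rho(\cdot)$ denotes spectral radius and $\|\cdot\|$ the Frobenius norm $\|X\|=\sqrt{\sum_{i,j}x_{ij}^2}$. Problem (P) for a non-negative square matrix $A$ is: minimize $\|X-A\|$ subject to $X\ge 0$ (entrywise) and $\rho(X)\le1$. A local minimum of (P) is a feasible $X$ for which there is a neighbourhood $U$ of $X$ with $\|Y-A\|\ge\|X-A\|$ for all feasible $Y\in U$. *)

(* Defs.v *)
(* Real numbers are modelled by an arbitrary real closed field R
   (rcfType); complex numbers a + b i are encoded as pairs (a, b) of reals. *)
From HB Require Import structures.
From mathcomp Require Import all_boot all_order all_algebra.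
Set Implicit Arguments. Unset Strict Implicit. Unset Printing Implicit Defensive.
Import Order.TTheory GRing.Theory Num.Theory.
Local Open Scope ring_scope.

(* Evaluation of a real polynomial p at the complex number a + b i,
   by Horner's scheme in C = R x R: returns (Re p(a+bi), Im p(a+bi)). *)
Definition chorner (R : rcfType) (p : {poly R}) (a b : R) : R * R :=
  foldr (fun c (u : R * R) => (u.1 * a - u.2 * b + c, u.1 * b + u.2 * a))
        (0, 0) (polyseq p).

Definition ceigen (R : rcfType) (d : nat) (X : 'M[R]_d) (a b : R) : Prop :=
  chorner (char_poly X) a b = (0, 0).

Definition cmod (R : rcfType) (a b : R) : R := Num.sqrt (a ^+ 2 + b ^+ 2).

Definition spectral_radius_is (R : rcfType) (d : nat) (X : 'M[R]_d) (r : R) : Prop :=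
  (forall a b, ceigen X a b -> cmod a b <= r) /\
  (exists a b, ceigen X a b /\ cmod a b = r).

Definition frob (R : rcfType) (d : nat) (X : 'M[R]_d) : R :=
  Num.sqrt (\sum_(i < d) \sum_(j < d) X i j ^+ 2).

Definition nonneg_mx (R : rcfType) (d : nat) (X : 'M[R]_d) : Prop :=
  forall i j, 0 <= X i j.

Definition feasibleP (R : rcfType) (d : nat) (X : 'M[R]_d) : Prop :=
  nonneg_mx X /\ exists r, spectral_radius_is X r /\ r <= 1.

Definition local_minP (R : rcfType) (d : nat) (A X : 'M[R]_d) : Prop :=
  feasibleP X /\
  exists eps : R, 0 < eps /\
    forall Y : 'M[R]_d, feasibleP Y -> frob (Y - X) < eps ->
      frob (X - A) <= frob (Y - A).

(* Main.v *)
Require Import Defs.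
From HB Require Import structures.
From mathcomp Require Import all_boot all_order all_algebra.
From mathcomp Require Import polyrcf complex lra.
Set Implicit Arguments. Unset Strict Implicit. Unset Printing Implicit Defensive.
Import Order.TTheory GRing.Theory Num.Theory.
Local Open Scope ring_scope.



Section S.
Variable R : rcfType.
Local Notation C := (R[i]).
Local Notation toC := (real_complex R).

Lemma chornerE (p : {poly R}) a b :
  chorner p a b = (complex.Re ((map_poly toC p).[(a +i* b)%C]), complex.Im ((map_poly toC p).[(a +i* b)%C])).
Proof.
rewrite /chorner map_polyE horner_Poly.
elim: (polyseq p) => [|c s IH] /=; first by [].
by rewrite IH; case: (horner_rec _ _) => x y /=; rewrite addr0.
Qed.

Variable d : nat.
Implicit Types X Y : 'M[R]_d.

Lemma ceigenE X a b : ceigen X a b <-> root (char_poly (map_mx toC X)) (a +i* b)%C.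
Proof.
rewrite /ceigen chornerE -map_char_poly rootE.
case: ((map_poly toC (char_poly X)).[(a +i* b)%C]) => x y /=.
split; first by case=> -> ->.
by move/eqP; case=> -> ->.
Qed.

Lemma cmodE (a b : R) : (cmod a b)%:C%C = `|(a +i* b)%C|.
Proof. by rewrite (normc_def (a +i* b)%C). Qed.

Definition mc (z : C) := cmod (complex.Re z) (complex.Im z).

Lemma seq_argmax (s : seq C) : s != [::] -> exists2 z0, z0 \in s & forall z, z \in s -> mc z <= mc z0.
Proof.
elim: s => [|x s IH] // _.
have [->|sn] := eqVneq s [::].
  by exists x; rewrite ?mem_seq1 // => z; rewrite mem_seq1 => /eqP ->.
have [z0 z0s Hz0] := IH sn.
have [le|lt] := leP (mc x) (mc z0).
  exists z0; first by rewrite inE z0s orbT.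
  by move=> z; rewrite inE => /orP[/eqP->|/Hz0].
exists x; first by rewrite inE eqxx.
move=> z; rewrite inE => /orP[/eqP->//|/Hz0 h]; exact: (le_trans h (ltW lt)).
Qed.

Lemma sr_exists X : (0 < d)%N -> exists r, spectral_radius_is X r.
Proof.
move=> d0.
have [rs Hrs] := closed_field_poly_normal (char_poly (map_mx toC X)).
have mon := char_poly_monic (map_mx toC X).
rewrite (monicP mon) scale1r in Hrs.
have rsn : rs != [::].
  apply/eqP=> rs0; move: (size_char_poly (map_mx toC X)); rewrite Hrs rs0 big_nil size_poly1.
  by case: d d0.
have [z0 z0s Hz0] := seq_argmax rsn.
exists (mc z0); split.
  move=> a b /ceigenE; rewrite Hrs root_prod_XsubC => /Hz0.
  by rewrite /mc.
exists (complex.Re z0), (complex.Im z0); split => //.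
apply/ceigenE; rewrite Hrs root_prod_XsubC.
by case: z0 z0s {Hz0}.
Qed.

Lemma sr_unique X r1 r2 : spectral_radius_is X r1 -> spectral_radius_is X r2 -> r1 = r2.
Proof.
move=> [h1 [a1 [b1 [e1 m1]]]] [h2 [a2 [b2 [e2 m2]]]].
apply/eqP; rewrite eq_le; apply/andP; split.
  by rewrite -m1; apply: h2.
by rewrite -m2; apply: h1.
Qed.

End S.



Section S.
Variable R : rcfType.
Local Notation C := (R[i]).
Local Notation toC := (real_complex R).
Local Notation N := (@Normc.normc R).

Lemma char_poly_tr (F : comNzRingType) n (M : 'M[F]_n) : char_poly M^T = char_poly M.
Proof.
rewrite /char_poly -det_tr; congr (\det _); apply/matrixP => i j; rewrite !mxE eq_sym.
by [].
Qed.

Lemma normC (z : C) : `|z| = (N z)%:C%C.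
Proof. by case: z => x y; rewrite normc_def. Qed.

Lemma N_sum (I : finType) (f : I -> C) : N (\sum_i f i) <= \sum_i N (f i).
Proof.
rewrite -lecR -normC rmorph_sum /=.
apply: (le_trans (ler_norm_sum _ _ _)).
by apply: ler_sum => i _; rewrite normC.
Qed.

Lemma N_real (x : R) : 0 <= x -> N (x%:C%C) = x.
Proof. by move=> x0; rewrite /Normc.normc /= expr0n addr0 sqrtr_sqr ger0_norm. Qed.

Variable d : nat.
Implicit Types X Y : 'M[R]_d.

Lemma L1 Y (v : 'I_d -> R) c : nonneg_mx Y -> (forall k, 0 < v k) ->
  (forall k, \sum_l Y k l * v l <= c * v k) -> forall a b, ceigen Y a b -> cmod a b <= c.
Proof.
move=> Y0 v0 Hv a b /ceigenE.
set M := map_mx toC Y; set lam := (a +i* b)%C => rt.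
have : root (char_poly M^T) lam by rewrite char_poly_tr.
rewrite -eigenvalue_root_char => /eigenvalueP [w Hw wn0].
have Hk : forall k, \sum_l M k l * w 0 l = lam * w 0 k.
  move=> k; move/matrixP: Hw => /(_ 0 k); rewrite !mxE => <-.
  by apply: eq_bigr => l _; rewrite !mxE mulrC.
have [i0 [j0 wj0]] := matrix0Pn _ wn0.
have {}wj0 : w 0 j0 != 0 by rewrite -(ord1 i0).
pose g k := N (w 0 k) / v k.
case: (@arg_maxP _ _ _ j0 xpredT g) => // k _ Hmax.
have gpos : 0 < g k.
  apply: (lt_le_trans _ (Hmax j0 isT)); rewrite /g divr_gt0 //.
  rewrite lt_neqAle eq_sym; apply/andP; split.
    by apply/negP => /eqP /Normc.eq0_normc; move/eqP: wj0.
  by case: (w 0 j0) => x y; exact: sqrtr_ge0.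
have Nk : N (w 0 k) = g k * v k by rewrite /g divfK // gt_eqF.
have Nkpos : 0 < N (w 0 k) by rewrite Nk mulr_gt0.
have Nl : forall l, N (w 0 l) <= g k * v l.
  move=> l; rewrite -ler_pdivrMr // ; exact: Hmax.
have : N lam * N (w 0 k) <= c * N (w 0 k).
  rewrite -Normc.normcM -Hk.
  apply: (le_trans (N_sum _)).
  apply: (@le_trans _ _ (\sum_l Y k l * (g k * v l))).
    apply: ler_sum => l _; rewrite Normc.normcM mxE N_real //.
    by apply: ler_wpM2l.
  rewrite Nk mulrCA.
  under eq_bigr => l _ do rewrite mulrCA.
  by rewrite -mulr_sumr ler_pM2l // Hv.
by rewrite ler_pM2r.
Qed.

End S.



Section S.
Variable R : rcfType.
Local Notation C := (R[i]).
Local Notation toC := (real_complex R).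
Variable d : nat.
Implicit Types X Y : 'M[R]_d.

Lemma sr_ge0 X r : spectral_radius_is X r -> 0 <= r.
Proof. by move=> [_ [a [b [_ <-]]]]; exact: sqrtr_ge0. Qed.

Lemma KIp X k : let q := fun i => \sum_j (\adj (char_poly_mx X)) i j in
  'X * q k - \sum_l (X k l)%:P * q l = char_poly X.
Proof.
move=> q.
have E := congr1 (fun M : 'M[{poly R}]_d => \sum_j M k j) (mul_mx_adj (char_poly_mx X)).
rewrite /= in E.
have -> : char_poly X = \sum_j (\det (char_poly_mx X))%:M k j :> {poly R}.
  rewrite (bigD1 k) //= big1 ?addr0; first by rewrite mxE eqxx mulr1n.
  by move=> j /negPf kj; rewrite mxE eq_sym kj mulr0n.
rewrite -E; apply/esym.
under eq_bigr => j _ do rewrite mxE.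
rewrite exchange_big /=.
rewrite (eq_bigr (fun l => char_poly_mx X k l * q l)); last by move=> l _; rewrite /q mulr_sumr.
under eq_bigr => l _ do rewrite !mxE mulrBl.
rewrite sumrB (bigD1 k) //= big1 ?addr0.
  by rewrite eqxx mulr1n.
by move=> l /negPf kl; rewrite eq_sym kl mulr0n mul0r.
Qed.

Lemma KI X k t : let q := fun i => \sum_j (\adj (char_poly_mx X)) i j in
  t * (q k).[t] - \sum_l X k l * (q l).[t] = (char_poly X).[t].
Proof.
move=> q; rewrite -(KIp X k) hornerD hornerN hornerM hornerX horner_sum.
congr (_ - _); rewrite horner_sum; apply: eq_bigr => l _.
by rewrite hornerM hornerC.
Qed.

Lemma Pnz X r t : spectral_radius_is X r -> r < t -> (char_poly X).[t] != 0.
Proof.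
move=> Hr rt; apply/negP => /eqP P0.
have r0 := sr_ge0 Hr.
have : ceigen X t 0.
  apply/ceigenE; rewrite -map_char_poly rootE.
  by rewrite (_ : (t +i* 0)%C = toC t) // horner_map P0 rmorph0.
move/(proj1 Hr); rewrite /cmod expr0n addr0 sqrtr_sqr ger0_norm.
  by rewrite leNgt rt.
exact: (le_trans r0 (ltW rt)).
Qed.


Lemma Ppos X r t : spectral_radius_is X r -> r < t -> 0 < (char_poly X).[t].
Proof.
move=> Hr rt.
have := @poly_pinfty_gt_lc _ (char_poly X); rewrite (monicP (char_poly_monic X)) => /(_ ltr01) [n0 Hn0].
rewrite lt_neqAle eq_sym (Pnz Hr rt) /=.
rewrite leNgt; apply/negP => Pt.
have tT : t <= Num.max t n0 by rewrite le_max lexx.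
have PT : 1 <= (char_poly X).[Num.max t n0] by apply: Hn0; rewrite le_max lexx orbT.
have [x /andP [tx _] rx] := @poly_ivt _ (char_poly X) _ _ tT (ltac:(by rewrite (ltW Pt) (le_trans ler01 PT))).
by move: (Pnz Hr (lt_le_trans rt tx)); rewrite -rootE rx.
Qed.

Lemma L2 X r s : nonneg_mx X -> spectral_radius_is X r -> r < s ->
  exists v : 'I_d -> R, (forall k, 0 < v k) /\ (forall k, \sum_l X k l * v l < s * v k).
Proof.
move=> X0 Hr rs.
pose q := fun i => \sum_j (\adj (char_poly_mx X)) i j.
have KIq : forall k t, t * (q k).[t] - \sum_l X k l * (q l).[t] = (char_poly X).[t].
  by move=> k t; exact: KI.
have := @poly_pinfty_gt_lc _ (char_poly X); rewrite (monicP (char_poly_monic X)) => /(_ ltr01) [n0 Hn0].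
pose B := \sum_k \sum_l X k l.
pose T := Num.max (Num.max n0 (s + 1)) B.
have n0T : n0 <= T by rewrite /T !le_max lexx.
have sT : s < T.
  apply: (@lt_le_trans _ _ (s + 1)); first by rewrite ltrDl ltr01.
  by rewrite /T !le_max lexx orbT.
have BT : B <= T by rewrite /T le_max lexx orbT.
have PT : 0 < (char_poly X).[T] by apply: (lt_le_trans ltr01); apply: Hn0.
have rowB : forall k, \sum_l X k l <= T.
  move=> k; apply: le_trans BT; rewrite /B [in X in _ <= X](bigD1 k) //= lerDl.
  by apply: sumr_ge0 => i _; apply: sumr_ge0 => j _; exact: X0.
have qT : forall k0, 0 < (q k0).[T].
  move=> k0.
  case: (@arg_minP _ _ _ k0 xpredT (fun k => (q k).[T])) => // m _ Hm.
  apply: (lt_le_trans _ (Hm k0 isT)).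
  rewrite ltNge; apply/negP => qm.
  have := KIq m T.
  have : \sum_l X m l * (q m).[T] <= \sum_l X m l * (q l).[T].
    by apply: ler_sum => l _; apply: ler_wpM2l; [exact: X0 | exact: Hm].
  rewrite -mulr_suml => H1 H2.
  have : (char_poly X).[T] <= (q m).[T] * (T - \sum_l X m l).
    by rewrite -H2 mulrBr (mulrC _ T) lerD2l lerN2 mulrC.
  rewrite leNgt => /negP; apply.
  apply: (le_lt_trans _ PT); apply: mulr_le0_ge0 => //.
  by rewrite subr_ge0.
pose Q := \prod_k q k.
have QT : 0 < Q.[T] by rewrite /Q horner_prod; apply: prodr_gt0 => k _.
have Qn0 : Q != 0 by apply/negP => /eqP Q0; move: QT; rewrite Q0 horner0 ltxx.
have rootQ : forall x k, root (q k) x -> root Q x.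
  move=> x k; rewrite !rootE /Q horner_prod (bigD1 k) //= => /eqP ->.
  by rewrite mul0r.
have claim : forall s1, s <= s1 -> s1 < T -> {in `]s1, T[, forall x, ~~ root Q x} -> forall k, 0 < (q k).[s1].
  move=> s1 ss1 s1T noQ k.
  have rs1 : r < s1 by exact: (lt_le_trans rs ss1).
  have c1 : forall k, 0 <= (q k).[s1].
    move=> k'; rewrite leNgt; apply/negP => neg.
    have [x xin rx] := @poly_ivtoo _ (q k') s1 T (ltW s1T) (ltac:(by rewrite pmulr_llt0 ?qT)).
    by move: (noQ x xin); rewrite (rootQ _ _ rx).
  rewrite lt_neqAle c1 andbT; apply/negP => /eqP q0.
  have := KIq k s1; rewrite -q0 mulr0 sub0r => H.
  have : 0 <= \sum_l X k l * (q l).[s1] by apply: sumr_ge0 => l _; apply: mulr_ge0 => //; exact: X0.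
  by rewrite -oppr_le0 H leNgt (Ppos Hr rs1).
have Hs1 : prev_root Q s T = s.
  have := claim (prev_root Q s T).
  have hin := prev_root_in Q s T.
  rewrite (_ : Num.min s T = s) in hin; last by apply/min_idPl; exact: ltW.
  have h1 : s <= prev_root Q s T by move: hin; rewrite in_itv /= => /andP[].
  move=> /(_ h1 (prev_root_lt sT Qn0) (@prev_noroot _ Q s T)).
  case: prev_rootP.
  - by move=> Q0; rewrite Q0 eqxx in Qn0.
  - move=> y _ Qy _ _ Hy; move: QT.
    have : 0 < Q.[y] by rewrite /Q horner_prod; apply: prodr_gt0 => k _.
    by rewrite Qy ltxx.
  - by move=> c _ -> _ _; rewrite /Num.min sT.
exists (fun k => (q k).[s]); split.
  move=> k; have noQ := @prev_noroot _ Q s T; rewrite Hs1 in noQ.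
  exact: (claim s (lexx s) sT noQ k).
move=> k; have := KIq k s.
have Ps := Ppos Hr rs.
move=> H; rewrite -subr_gt0.
by rewrite -H in Ps.
Qed.

End S.



Section S.
Variable R : rcfType.
Variable d : nat.
Implicit Types X Y M N : 'M[R]_d.

Lemma frob_ge0 M : 0 <= frob M.
Proof. exact: sqrtr_ge0. Qed.

Lemma frob_scale (c : R) M : frob (c *: M) = `|c| * frob M.
Proof.
rewrite /frob -sqrtr_sqr -sqrtrM ?sqr_ge0 //; congr Num.sqrt.
rewrite mulr_sumr; apply: eq_bigr => k _; rewrite mulr_sumr; apply: eq_bigr => l _.
by rewrite mxE exprMn.
Qed.

Lemma frob_eq0 M : frob M = 0 -> M = 0.
Proof.
move=> /eqP; rewrite sqrtr_eq0 => Hle.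
have S0 : \sum_k \sum_l M k l ^+ 2 = 0.
  apply/eqP; rewrite eq_le Hle /=; apply: sumr_ge0 => k _; apply: sumr_ge0 => l _; exact: sqr_ge0.
apply/matrixP => k l; rewrite mxE.
have := @psumr_eq0P _ _ xpredT (fun k => \sum_l M k l ^+ 2) _ S0 k isT.
move=> /(_ _) H.
have {}H : \sum_l M k l ^+ 2 = 0.
  apply: (@psumr_eq0P _ _ xpredT (fun k => \sum_l M k l ^+ 2)) => // i _.
  by apply: sumr_ge0 => j _; exact: sqr_ge0.
have := @psumr_eq0P _ _ xpredT (fun l => M k l ^+ 2) (fun i _ => sqr_ge0 _) H l isT.
by move/eqP; rewrite sqrf_eq0 => /eqP.
Qed.

Lemma frob_lt M N i j : (forall k l, M k l ^+ 2 <= N k l ^+ 2) -> M i j ^+ 2 < N i j ^+ 2 ->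
  frob M < frob N.
Proof.
move=> Hle Hlt.
have E : forall P : 'M[R]_d, \sum_k \sum_l P k l ^+ 2 = \sum_(p : 'I_d * 'I_d) P p.1 p.2 ^+ 2.
  by move=> P; rewrite pair_bigA.
have lt : \sum_k \sum_l M k l ^+ 2 < \sum_k \sum_l N k l ^+ 2.
  rewrite !E (bigD1 (i, j)) //= [X in _ < X](bigD1 (i, j)) //=.
  apply: ltr_leD => //; apply: ler_sum => p _; exact: Hle.
rewrite /frob ltr_sqrt //.
apply: le_lt_trans lt; apply: sumr_ge0 => k _; apply: sumr_ge0 => l _; exact: sqr_ge0.
Qed.

Lemma frob_single M i j : (forall k l, (k != i) || (l != j) -> M k l = 0) -> frob M = `|M i j|.
Proof.
move=> H; rewrite /frob -sqrtr_sqr; congr Num.sqrt.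
rewrite (bigD1 i) //= [X in _ + X]big1 ?addr0; last first.
  by move=> k ki; apply: big1 => l _; rewrite H ?ki // expr0n.
rewrite (bigD1 j) //= [X in _ + X]big1 ?addr0 //.
by move=> l lj; rewrite H ?lj ?orbT // expr0n.
Qed.

End S.



Lemma feas_of (R : rcfType) d (Y : 'M[R]_d) : (0 < d)%N -> nonneg_mx Y ->
  (forall a b, ceigen Y a b -> cmod a b <= 1) -> feasibleP Y.
Proof.
move=> d0 Y0 H; split => //.
have [r Hr] := sr_exists Y d0; exists r; split => //.
by case: Hr => _ [a [b [ab <-]]]; apply: H.
Qed.

Lemma d_pos (R : rcfType) d (A : 'M[R]_d) r : spectral_radius_is A r -> (0 < d)%N.
Proof.
case: d A => // A [_ [a [b [/ceigenE + _]]]].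
by rewrite /char_poly det_mx00 rootC oner_eq0.
Qed.

Theorem lemma3 (R : rcfType) (d : nat) (A X : 'M[R]_d) :
  nonneg_mx A ->
  (exists r, spectral_radius_is A r /\ 1 < r) ->
  local_minP A X ->
  (forall i j, X i j <= A i j) /\ spectral_radius_is X 1.
Proof.
move=> A0 [rA [HA rA1]] [[X0 [rX [HX rX1]]] [eps [eps0 Hmin]]].
have d0 := d_pos HA.
split.
  move=> i j; rewrite leNgt; apply/negP => AX.
  pose del := Num.min (X i j - A i j) (eps / 2).
  have del0 : 0 < del by rewrite lt_min subr_gt0 AX /= divr_gt0.
  have delle : del <= X i j - A i j by rewrite ge_min lexx.
  have dele : del < eps by rewrite gt_min; apply/orP; right; lra.
  pose Y := X - del *: delta_mx i j.
  have YE : forall k l, Y k l = X k l - del * ((k == i) && (l == j))%:R.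
    by move=> k l; rewrite !mxE.
  have YleX : forall k l, Y k l <= X k l.
    by move=> k l; rewrite YE gerBl; apply: mulr_ge0; [exact: ltW | case: (_ && _)].
  have Y0 : nonneg_mx Y.
    move=> k l; rewrite YE; case: (boolP ((k == i) && (l == j))) => [/andP[/eqP-> /eqP->]|_].
      by rewrite mulr1; move: (A0 i j); lra.
    by rewrite mulr0 subr0.
  have fY : feasibleP Y.
    apply: feas_of => // a b Hab; rewrite leNgt; apply/negP => c1.
    pose s := (1 + cmod a b) / 2.
    have [v [v0 Hv]] := L2 X0 HX (ltac:(rewrite /s; lra) : rX < s).
    have Hc : cmod a b <= s.
      apply: (L1 Y0 v0 _ Hab) => k.
      apply/ltW/(le_lt_trans _ (Hv k)); apply: ler_sum => l _.
      by apply: ler_wpM2r; [exact: ltW | exact: YleX].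
    by move: Hc; rewrite /s; lra.
  have := Hmin Y fY.
  have -> : frob (Y - X) = del.
    rewrite (_ : Y - X = (- del) *: delta_mx i j); last by rewrite /Y addrAC subrr add0r scaleNr.
    rewrite frob_scale normrN gtr0_norm // (@frob_single _ _ _ i j).
      by rewrite mxE !eqxx normr1 mulr1.
    by move=> k l /orP[] /negPf H; rewrite mxE H ?andbF.
  move=> /(_ dele); rewrite leNgt => /negP; apply.
  apply: (@frob_lt _ _ _ _ i j).
    move=> k l; rewrite !mxE.
    case: (boolP ((k == i) && (l == j))) => [/andP[/eqP-> /eqP->]|_].
      by rewrite mulr1; nra.
    by rewrite mulr0 subr0.
  by rewrite !mxE !eqxx mulr1; nra.
have [rX1'|rXlt] := eqVneq rX 1; first by rewrite -rX1'.
have rXlt1 : rX < 1 by rewrite lt_neqAle rXlt.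
have rX0 := sr_ge0 HX.
pose s := (rX + 1) / 2.
have [v [v0 Hv]] := L2 X0 HX (ltac:(rewrite /s; lra) : rX < s).
pose i0 : 'I_d := Ordinal d0.
case: (@arg_minP _ _ _ i0 xpredT v) => // k0 _ Hk0.
pose m := v k0.
have m0 : 0 < m by apply: v0.
pose K := \sum_k \sum_l A k l * v l.
have K0 : forall k, \sum_l A k l * v l <= K.
  move=> k; rewrite /K [X in _ <= X](bigD1 k) //= lerDl.
  apply: sumr_ge0 => i _; apply: sumr_ge0 => j _; apply: mulr_ge0; [exact: A0|exact: ltW].
have Kpos : 0 <= K by apply: le_trans (K0 i0); apply: sumr_ge0 => j _; apply: mulr_ge0; [exact: A0|exact: ltW].
pose F := frob (A - X).
have F0 : 0 <= F := frob_ge0 _.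
pose t := Num.min (1 / 2) (Num.min (eps / (F + 1)) ((1 - s) * m / (K + 1))).
have t0 : 0 < t.
  have e1 : 0 < eps / (F + 1) by rewrite divr_gt0 //; lra.
  have e2 : 0 < (1 - s) * m / (K + 1) by rewrite divr_gt0 ?mulr_gt0 //; rewrite /s; lra.
  by rewrite !lt_min e1 e2 andbT; lra.
have t1 : t <= 1 / 2 by rewrite ge_min lexx.
have t2 : t <= eps / (F + 1) by rewrite !ge_min lexx orbT.
have t3 : t <= (1 - s) * m / (K + 1) by rewrite !ge_min lexx !orbT.
clearbody t.
pose Y := X + t *: (A - X).
have YE : forall k l, Y k l = (1 - t) * X k l + t * A k l.
  by move=> k l; rewrite !mxE; lra.
have Y0 : nonneg_mx Y.
  move=> k l; rewrite YE; apply: addr_ge0; apply: mulr_ge0.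
  - lra.
  - exact: X0.
  - lra.
  - exact: A0.
have fY : feasibleP Y.
  apply: feas_of => //; apply: (L1 Y0 v0) => k.
  under eq_bigr => l _ do rewrite YE mulrDl -!mulrA.
  rewrite big_split /= -!mulr_sumr.
  have h1 := Hv k; have h2 := K0 k; have h3 : m <= v k by apply: Hk0.
  have h4 : t * (K + 1) <= (1 - s) * m by rewrite -ler_pdivlMr //; lra.
  have h5 : 0 < v k := v0 k.
  have h6 : 0 <= \sum_l X k l * v l.
    by apply: sumr_ge0 => l _; apply: mulr_ge0; [exact: X0|exact: ltW].
  have h7 : (1 - t) * \sum_l X k l * v l <= (1 - t) * (s * v k).
    by apply: ler_wpM2l; [lra | exact: ltW].
  have h8 : t * \sum_l A k l * v l <= t * K by apply: ler_wpM2l; [lra|].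
  have h9 : (1 - t) * (s * v k) <= s * v k.
    rewrite mulrA ler_pM2r //; rewrite /s; nra.
  have h10 : (1 - s) * m <= (1 - s) * v k by apply: ler_wpM2l; [rewrite /s; lra|].
  rewrite mul1r; nra.
have := Hmin Y fY.
have -> : frob (Y - X) = t * F.
  by rewrite /Y addrAC subrr add0r frob_scale gtr0_norm.
have tF : t * F < eps.
  have : t * (F + 1) <= eps by rewrite -ler_pdivlMr //; lra.
  nra.
move=> /(_ tF).
have -> : Y - A = (1 - t) *: (X - A).
  apply/matrixP => k l; rewrite !mxE; lra.
rewrite frob_scale gtr0_norm; last lra.
move=> H.
have FXA : frob (X - A) = 0.
  have := frob_ge0 (X - A); nra.
have XA : X = A by apply/eqP; rewrite -subr_eq0; apply/eqP; exact: frob_eq0.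
rewrite XA in HX; have := sr_unique HX HA; lra.
Qed.
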